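(* Let $c,\delta,M$ be positive constants and fix a metric on the disc $D_c=\{z\in\mathbb{C}:|z|<c\}$, with Laplacian $\triangle$. Then there is a constant $\lambda=\lambda(\delta,M,c)$ such that every smooth function $f:D_c\to\mathbb{C}$ satisfying $|f|\le\delta$ and $|d\triangle f|\le M$ on $D_c$ satisfies $|\triangle f|\le\lambda$ on $D_{c/4}=\{|z|<c/4\}$. *)

(* Defs.v *)
From Stdlib Require Import Reals.
From Coquelicot Require Import Coquelicot.
Open Scope R_scope.

(* Real-valued functions on the plane R^2 = C (coordinates (x,y), z = x + i y). *)
Definition fn := (R * R)%type -> R.

Definition opendisc (r : R) (p : R * R) : Prop := fst p ^ 2 + snd p ^ 2 < r ^ 2.

Definition dx (f : fn) : fn := fun p => Derive (fun t => f (t, snd p)) (fst p).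
Definition dy (f : fn) : fn := fun p => Derive (fun t => f (fst p, t)) (snd p).

Fixpoint Ck (k : nat) (r : R) (f : fn) : Prop :=
  match k with
  | O => forall p, opendisc r p -> continuous f p
  | S k' =>
      (forall p, opendisc r p -> continuous f p) /\
      (forall p, opendisc r p ->
         ex_derive (fun t => f (t, snd p)) (fst p) /\
         ex_derive (fun t => f (fst p, t)) (snd p)) /\
      Ck k' r (dx f) /\ Ck k' r (dy f)
  end.

Definition smooth_on (r : R) (f : fn) : Prop := forall k, Ck k r f.

Definition smoothC_on (r : R) (f : (R * R)%type -> C) : Prop :=
  smooth_on r (fun p => Re (f p)) /\ smooth_on r (fun p => Im (f p)).

(* A smooth Riemannian metric g = g11 dx^2 + 2 g12 dx dy + g22 dy^2 on D_c. *)
Record metric (c : R) := {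
  g11 : fn; g12 : fn; g22 : fn;
  g11_smooth : smooth_on c g11;
  g12_smooth : smooth_on c g12;
  g22_smooth : smooth_on c g22;
  g_posdef : forall p, opendisc c p -> 0 < g11 p /\ 0 < g11 p * g22 p - g12 p ^ 2 }.

Arguments g11 {c}. Arguments g12 {c}. Arguments g22 {c}.

Definition gdet {c} (g : metric c) : fn := fun p => g11 g p * g22 g p - g12 g p ^ 2.

(* Laplace-Beltrami operator:
   Δ f = (1/sqrt det g) ∂_i ( sqrt(det g) g^{ij} ∂_j f ),
   with g^{11} = g22/det, g^{12} = -g12/det, g^{22} = g11/det. *)
Definition lap {c} (g : metric c) (f : fn) : fn := fun p =>
  / sqrt (gdet g p) *
  ( dx (fun q => sqrt (gdet g q) / gdet g q *
                 (g22 g q * dx f q - g12 g q * dy f q)) p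
  + dy (fun q => sqrt (gdet g q) / gdet g q *
                 (- g12 g q * dx f q + g11 g q * dy f q)) p ).

Definition lapC {c} (g : metric c) (f : (R * R)%type -> C) : (R * R)%type -> C :=
  fun p => (lap g (fun q => Re (f q)) p, lap g (fun q => Im (f q)) p).

(* Squared g-norm of a real covector a dx + b dy: g^{ij} w_i w_j. *)
Definition covnorm2 {c} (g : metric c) (p : R * R) (a b : R) : R :=
  (g22 g p * a ^ 2 - 2 * g12 g p * a * b + g11 g p * b ^ 2) / gdet g p.

(* g-norm of the complex 1-form d h = d(Re h) + i d(Im h). *)
Definition dnormC {c} (g : metric c) (h : (R * R)%type -> C) (p : R * R) : R :=
  let u := fun q => Re (h q) in
  let v := fun q => Im (h q) in
  sqrt (covnorm2 g p (dx u p) (dy u p) + covnorm2 g p (dx v p) (dy v p)).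

(* Main.v *)
Require Import Defs.
From Stdlib Require Import Reals.
From Coquelicot Require Import Coquelicot.
From Stdlib Require Import Lra Lia Psatz Classical ClassicalEpsilon.
Open Scope R_scope.

Lemma loc2 (p : R*R) (P : R*R -> Prop) e : 0 < e ->
  (forall q, Rabs (fst q - fst p) < e -> Rabs (snd q - snd p) < e -> P q) -> locally p P.
Proof.
  intros He H. exists (mkposreal e He). intros [u v] [H1 H2]. apply H; simpl; [exact H1|exact H2].
Qed.

Lemma loc1 (x : R) (P : R -> Prop) e : 0 < e ->
  (forall t, Rabs (t - x) < e -> P t) -> locally x P.
Proof.
  intros He H. exists (mkposreal e He). intros t Ht. apply H. exact Ht.
Qed.

Lemma cont2_eps (F : R*R -> R) p : continuous F p -> forall eps, 0 < eps ->
  exists d, 0 < d /\ forall q, Rabs (fst q - fst p) < d -> Rabs (snd q - snd p) < d ->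
   Rabs (F q - F p) < eps.
Proof.
  intros Hc eps He.
  destruct (Hc (ball (F p) (mkposreal eps He))) as [d Hd].
  { apply locally_ball. }
  exists d. split. apply cond_pos. intros [u v] H1 H2. apply (Hd (u,v)). split; [exact H1|exact H2].
Qed.

Lemma disc_box r p : opendisc r p -> exists e, 0 < e /\
  forall q, Rabs (fst q - fst p) < e -> Rabs (snd q - snd p) < e -> opendisc r q.
Proof.
  unfold opendisc. destruct p as [x y]; simpl. intros H.
  set (s := r^2 - (x^2+y^2)).
  assert (Hs : 0 < s) by (unfold s; lra).
  set (K := 2*(Rabs x + Rabs y + 1)).
  assert (HK : 0 < K) by (unfold K; pose proof (Rabs_pos x); pose proof (Rabs_pos y); lra).
  exists (Rmin 1 (s / K)). split.
  { apply Rmin_pos. lra. apply Rdiv_lt_0_compat; lra. }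
  intros [u v]; simpl. intros H1 H2.
  assert (Ha : Rabs (u - x) < 1) by (eapply Rlt_le_trans; [exact H1| apply Rmin_l]).
  assert (Hb : Rabs (v - y) < 1) by (eapply Rlt_le_trans; [exact H2| apply Rmin_l]).
  assert (Ha' : Rabs (u - x) * K < s).
  { apply Rlt_le_trans with (s / K * K). apply Rmult_lt_compat_r; auto.
    eapply Rlt_le_trans; [exact H1|apply Rmin_r]. right; field; lra. }
  assert (Hb' : Rabs (v - y) * K < s).
  { apply Rlt_le_trans with (s / K * K). apply Rmult_lt_compat_r; auto.
    eapply Rlt_le_trans; [exact H2|apply Rmin_r]. right; field; lra. }
  set (a := u - x) in *. set (b := v - y) in *.
  replace u with (x + a) by (unfold a; ring). replace v with (y + b) by (unfold b; ring).
  assert (E1 : (x + a)^2 <= x^2 + 2 * Rabs x * Rabs a + Rabs a).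
  { assert (a*a <= Rabs a). { pose proof (pow2_abs a). pose proof (Rabs_pos a). nra. }
    assert (x * a <= Rabs x * Rabs a). { rewrite <- Rabs_mult. apply Rle_abs. }
    nra. }
  assert (E2 : (y + b)^2 <= y^2 + 2 * Rabs y * Rabs b + Rabs b).
  { assert (b*b <= Rabs b). { pose proof (pow2_abs b). pose proof (Rabs_pos b). nra. }
    assert (y * b <= Rabs y * Rabs b). { rewrite <- Rabs_mult. apply Rle_abs. }
    nra. }
  unfold K in *.
  pose proof (Rabs_pos x); pose proof (Rabs_pos y); pose proof (Rabs_pos a); pose proof (Rabs_pos b).
  assert (2 * Rabs x * Rabs a + Rabs a <= Rabs a * (2 * (Rabs x + Rabs y + 1)) / 2 * 2) by nra.
  assert (2 * Rabs y * Rabs b + Rabs b <= Rabs b * (2 * (Rabs x + Rabs y + 1)) / 2 * 2) by nra.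
  unfold s in *. nra.
Qed.

Lemma disc_line_x r p : opendisc r p -> locally (fst p) (fun t => opendisc r (t, snd p)).
Proof.
  intros H. destruct (disc_box r p H) as [e [He Hq]].
  apply (loc1 _ _ e He). intros t Ht. apply Hq; simpl; auto.
  replace (snd p - snd p) with 0 by ring. rewrite Rabs_R0; auto.
Qed.

Lemma disc_line_y r p : opendisc r p -> locally (snd p) (fun t => opendisc r (fst p, t)).
Proof.
  intros H. destruct (disc_box r p H) as [e [He Hq]].
  apply (loc1 _ _ e He). intros t Ht. apply Hq; simpl; auto.
  replace (fst p - fst p) with 0 by ring. rewrite Rabs_R0; auto.
Qed.

Lemma disc_loc r p : opendisc r p -> locally p (opendisc r).
Proof.
  intros H. destruct (disc_box r p H) as [e [He Hq]]. exact (loc2 p _ e He Hq).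
Qed.

Lemma dx_ext r f h p : (forall q, opendisc r q -> f q = h q) -> opendisc r p -> dx f p = dx h p.
Proof.
  intros E H. unfold dx. apply Derive_ext_loc.
  apply (filter_imp (fun t => opendisc r (t, snd p))). intros t Ht. apply E; auto.
  apply disc_line_x; auto.
Qed.

Lemma dy_ext r f h p : (forall q, opendisc r q -> f q = h q) -> opendisc r p -> dy f p = dy h p.
Proof.
  intros E H. unfold dy. apply Derive_ext_loc.
  apply (filter_imp (fun t => opendisc r (fst p, t))). intros t Ht. apply E; auto.
  apply disc_line_y; auto.
Qed.

Lemma Ck_C0 k r f : Ck k r f -> forall p, opendisc r p -> continuous f p.
Proof. destruct k; simpl; tauto. Qed.

Lemma Ck_S k : forall r f, Ck (S k) r f -> Ck k r f.
Proof.
  induction k; intros r f H.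
  - simpl in *; tauto.
  - destruct H as [H1 [H2 [H3 H4]]]. split; [auto|split; [auto|split; apply IHk; auto]].
Qed.

Lemma Ck_ext k : forall r f h, Ck k r f -> (forall p, opendisc r p -> f p = h p) -> Ck k r h.
Proof.
  assert (C : forall r (f h : fn), (forall p, opendisc r p -> continuous f p) ->
      (forall p, opendisc r p -> f p = h p) -> forall p, opendisc r p -> continuous h p).
  { intros r f h Hf E p Hp. apply (continuous_ext_loc h f).
    apply (filter_imp (opendisc r)). intros q Hq; auto. apply disc_loc; auto.
    auto. }
  induction k; intros r f h Hf E.
  - simpl in *. eapply C; eauto.
  - destruct Hf as [H1 [H2 [H3 H4]]]. split; [eapply C; eauto|].
    split.
    + intros p Hp. destruct (H2 p Hp) as [D1 D2]. split.
      * apply (ex_derive_ext_loc (fun t => f (t, snd p))); auto.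
        apply (filter_imp (fun t => opendisc r (t, snd p))). intros t Ht. apply E; auto.
        apply disc_line_x; auto.
      * apply (ex_derive_ext_loc (fun t => f (fst p, t))); auto.
        apply (filter_imp (fun t => opendisc r (fst p, t))). intros t Ht. apply E; auto.
        apply disc_line_y; auto.
    + split.
      * apply (IHk r (dx f)); auto. intros p Hp. apply (dx_ext r); auto.
      * apply (IHk r (dy f)); auto. intros p Hp. apply (dy_ext r); auto.
Qed.

Lemma Ck_plus k : forall r f h, Ck k r f -> Ck k r h -> Ck k r (fun q => f q + h q).
Proof.
  induction k; intros r f h Hf Hh.
  - intros p Hp. exact (continuous_plus f h p (Hf p Hp) (Hh p Hp)).
  - destruct Hf as [F1 [F2 [F3 F4]]]. destruct Hh as [H1 [H2 [H3 H4]]].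
    split. intros p Hp. exact (continuous_plus f h p (F1 p Hp) (H1 p Hp)).
    split. intros p Hp. destruct (F2 p Hp); destruct (H2 p Hp). split.
    exact (ex_derive_plus (fun t => f (t, snd p)) (fun t => h (t, snd p)) _ H H5).
    exact (ex_derive_plus (fun t => f (fst p, t)) (fun t => h (fst p, t)) _ H0 H6).
    split.
    + apply (Ck_ext k r (fun q => dx f q + dx h q)). apply IHk; auto.
      intros p Hp. unfold dx. rewrite Derive_plus. reflexivity. apply F2; auto. apply H2; auto.
    + apply (Ck_ext k r (fun q => dy f q + dy h q)). apply IHk; auto.
      intros p Hp. unfold dy. rewrite Derive_plus. reflexivity. apply F2; auto. apply H2; auto.
Qed.

Lemma Ck_const k : forall r a, Ck k r (fun _ => a).
Proof.
  induction k; intros r a.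
  - intros p Hp. apply continuous_const.
  - split. intros p Hp. apply continuous_const.
    split. intros p Hp. split; apply ex_derive_const.
    split.
    + apply (Ck_ext k r (fun _ => 0)). apply IHk. intros p Hp. unfold dx. rewrite Derive_const. auto.
    + apply (Ck_ext k r (fun _ => 0)). apply IHk. intros p Hp. unfold dy. rewrite Derive_const. auto.
Qed.

Lemma Ck_mult k : forall r f h, Ck k r f -> Ck k r h -> Ck k r (fun q => f q * h q).
Proof.
  induction k; intros r f h Hf Hh.
  - intros p Hp. exact (continuous_mult f h p (Hf p Hp) (Hh p Hp)).
  - pose proof (Ck_S _ _ _ Hf) as Hf'. pose proof (Ck_S _ _ _ Hh) as Hh'.
    destruct Hf as [F1 [F2 [F3 F4]]]. destruct Hh as [H1 [H2 [H3 H4]]].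
    split. intros p Hp. exact (continuous_mult f h p (F1 p Hp) (H1 p Hp)).
    split. intros p Hp. destruct (F2 p Hp); destruct (H2 p Hp). split.
    exact (ex_derive_mult (fun t => f (t, snd p)) (fun t => h (t, snd p)) _ H H5).
    exact (ex_derive_mult (fun t => f (fst p, t)) (fun t => h (fst p, t)) _ H0 H6).
    split.
    + apply (Ck_ext k r (fun q => dx f q * h q + f q * dx h q)).
      apply Ck_plus; apply IHk; auto.
      intros p Hp. unfold dx. rewrite Derive_mult. destruct p; reflexivity. apply F2; auto. apply H2; auto.
    + apply (Ck_ext k r (fun q => dy f q * h q + f q * dy h q)).
      apply Ck_plus; apply IHk; auto.
      intros p Hp. unfold dy. rewrite Derive_mult. destruct p; reflexivity. apply F2; auto. apply H2; auto.
Qed.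

Lemma Ck_fst k : forall r, Ck k r fst.
Proof.
  induction k; intros r.
  - intros [x y] Hp. apply continuous_fst.
  - split. intros [x y] Hp. apply continuous_fst.
    split. intros p Hp. split. simpl. apply ex_derive_id. simpl. apply ex_derive_const.
    split.
    + apply (Ck_ext k r (fun _ => 1)). apply Ck_const. intros p Hp. unfold dx. simpl.
      symmetry. exact (Derive_id _).
    + apply (Ck_ext k r (fun _ => 0)). apply Ck_const. intros p Hp. unfold dy. simpl.
      symmetry. apply Derive_const.
Qed.

Lemma Ck_snd k : forall r, Ck k r snd.
Proof.
  induction k; intros r.
  - intros [x y] Hp. apply continuous_snd.
  - split. intros [x y] Hp. apply continuous_snd.
    split. intros p Hp. split. simpl. apply ex_derive_const. simpl. apply ex_derive_id.
    split.
    + apply (Ck_ext k r (fun _ => 0)). apply Ck_const. intros p Hp. unfold dx. simpl.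
      symmetry. apply Derive_const.
    + apply (Ck_ext k r (fun _ => 1)). apply Ck_const. intros p Hp. unfold dy. simpl.
      symmetry. exact (Derive_id _).
Qed.

Lemma Ck_inv k : forall r f, (forall p, opendisc r p -> f p <> 0) -> Ck k r f -> Ck k r (fun q => / f q).
Proof.
  assert (C : forall r (f : fn), (forall p, opendisc r p -> f p <> 0) ->
     (forall p, opendisc r p -> continuous f p) -> forall p, opendisc r p -> continuous (fun q => / f q) p).
  { intros r f Hn Hc p Hp. apply (continuous_comp f (fun x => / x)). auto.
    apply continuous_Rinv. auto. }
  induction k; intros r f Hn Hf.
  - simpl in *. apply C; auto.
  - pose proof (Ck_S _ _ _ Hf) as Hf'.
    destruct Hf as [F1 [F2 [F3 F4]]].
    split. apply C; auto.
    split. intros p Hp. destruct (F2 p Hp). split.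
    apply (ex_derive_inv (fun t => f (t, snd p))); auto.
    apply (ex_derive_inv (fun t => f (fst p, t))); auto.
    split.
    + apply (Ck_ext k r (fun q => (-1 * dx f q) * (/ f q * / f q))).
      apply Ck_mult. apply Ck_mult; auto. apply Ck_const. apply Ck_mult; apply IHk; auto.
      intros p Hp. unfold dx. rewrite Derive_inv. destruct p; simpl. field. auto. apply F2; auto. auto.
    + apply (Ck_ext k r (fun q => (-1 * dy f q) * (/ f q * / f q))).
      apply Ck_mult. apply Ck_mult; auto. apply Ck_const. apply Ck_mult; apply IHk; auto.
      intros p Hp. unfold dy. rewrite Derive_inv. destruct p; simpl. field. auto. apply F2; auto. auto.
Qed.

Lemma Ck_sqrt k : forall r f, (forall p, opendisc r p -> 0 < f p) -> Ck k r f -> Ck k r (fun q => sqrt (f q)).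
Proof.
  assert (C : forall r (f : fn),
     (forall p, opendisc r p -> continuous f p) -> forall p, opendisc r p -> continuous (fun q => sqrt (f q)) p).
  { intros r f Hc p Hp. apply (continuous_comp f sqrt). auto. apply continuous_sqrt. }
  induction k; intros r f Hn Hf.
  - simpl in *. apply C; auto.
  - pose proof (Ck_S _ _ _ Hf) as Hf'.
    destruct Hf as [F1 [F2 [F3 F4]]].
    split. apply C; auto.
    split. intros p Hp. destruct (F2 p Hp). split.
    eexists. apply (is_derive_sqrt (fun t => f (t, snd p))). apply Derive_correct; auto. auto.
    eexists. apply (is_derive_sqrt (fun t => f (fst p, t))). apply Derive_correct; auto. auto.
    split.
    + apply (Ck_ext k r (fun q => dx f q * / (2 * sqrt (f q)))).
      apply Ck_mult; auto. apply Ck_inv. intros p Hp. pose proof (sqrt_lt_R0 _ (Hn p Hp)). lra.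
      apply Ck_mult. apply Ck_const. apply IHk; auto.
      intros [x y] Hp. unfold dx; simpl. symmetry. apply is_derive_unique.
      exact (is_derive_sqrt (fun t => f (t, y)) x _ (Derive_correct _ _ (proj1 (F2 (x,y) Hp))) (Hn (x,y) Hp)).
    + apply (Ck_ext k r (fun q => dy f q * / (2 * sqrt (f q)))).
      apply Ck_mult; auto. apply Ck_inv. intros p Hp. pose proof (sqrt_lt_R0 _ (Hn p Hp)). lra.
      apply Ck_mult. apply Ck_const. apply IHk; auto.
      intros [x y] Hp. unfold dy; simpl. symmetry. apply is_derive_unique.
      exact (is_derive_sqrt (fun t => f (x, t)) y _ (Derive_correct _ _ (proj2 (F2 (x,y) Hp))) (Hn (x,y) Hp)).
Qed.

Lemma sm_C0 r f : smooth_on r f -> forall p, opendisc r p -> continuous f p.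
Proof. intros H. exact (Ck_C0 0 r f (H 0%nat)). Qed.
Lemma sm_dx r f : smooth_on r f -> smooth_on r (dx f).
Proof. intros H k. destruct (H (S k)) as [_ [_ [A _]]]. exact A. Qed.
Lemma sm_dy r f : smooth_on r f -> smooth_on r (dy f).
Proof. intros H k. destruct (H (S k)) as [_ [_ [_ A]]]. exact A. Qed.
Lemma sm_exx r f p : smooth_on r f -> opendisc r p -> ex_derive (fun t => f (t, snd p)) (fst p).
Proof. intros H Hp. destruct (H 1%nat) as [_ [A _]]. apply A; auto. Qed.
Lemma sm_exy r f p : smooth_on r f -> opendisc r p -> ex_derive (fun t => f (fst p, t)) (snd p).
Proof. intros H Hp. destruct (H 1%nat) as [_ [A _]]. apply A; auto. Qed.
Lemma sm_ext r f h : smooth_on r f -> (forall p, opendisc r p -> f p = h p) -> smooth_on r h.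
Proof. intros H E k. apply (Ck_ext k r f); auto. Qed.
Lemma sm_plus r f h : smooth_on r f -> smooth_on r h -> smooth_on r (fun q => f q + h q).
Proof. intros A B k. apply Ck_plus; auto. Qed.
Lemma sm_mult r f h : smooth_on r f -> smooth_on r h -> smooth_on r (fun q => f q * h q).
Proof. intros A B k. apply Ck_mult; auto. Qed.
Lemma sm_const r a : smooth_on r (fun _ => a).
Proof. intros k. apply Ck_const. Qed.
Lemma sm_fst r : smooth_on r fst.
Proof. intros k. apply Ck_fst. Qed.
Lemma sm_snd r : smooth_on r snd.
Proof. intros k. apply Ck_snd. Qed.
Lemma sm_inv r f : (forall p, opendisc r p -> f p <> 0) -> smooth_on r f -> smooth_on r (fun q => / f q).
Proof. intros A B k. apply Ck_inv; auto. Qed.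
Lemma sm_sqrt r f : (forall p, opendisc r p -> 0 < f p) -> smooth_on r f -> smooth_on r (fun q => sqrt (f q)).
Proof. intros A B k. apply Ck_sqrt; auto. Qed.
Lemma sm_minus r f h : smooth_on r f -> smooth_on r h -> smooth_on r (fun q => f q - h q).
Proof.
  intros A B. apply (sm_ext r (fun q => f q + -1 * h q)). apply sm_plus; auto. apply sm_mult; auto.
  apply sm_const. intros; ring.
Qed.
Lemma sm_opp r f : smooth_on r f -> smooth_on r (fun q => - f q).
Proof.
  intros A. apply (sm_ext r (fun q => -1 * f q)). apply sm_mult; auto. apply sm_const. intros; ring.
Qed.

Section Met.
Variable c : R.
Variable g : metric c.

Lemma gdet_pos p : opendisc c p -> 0 < gdet g p.
Proof. intros H. unfold gdet. apply (g_posdef c g p H). Qed.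

Lemma g22_pos p : opendisc c p -> 0 < g22 g p.
Proof. intros H. destruct (g_posdef c g p H). nra. Qed.

Lemma sm_div f h : smooth_on c f -> smooth_on c h -> (forall p, opendisc c p -> h p <> 0) ->
  smooth_on c (fun q => f q / h q).
Proof.
  intros A B C. apply (sm_ext c (fun q => f q * / h q)). apply sm_mult; auto. apply sm_inv; auto.
  intros; reflexivity.
Qed.

Lemma sm_gdet : smooth_on c (gdet g).
Proof.
  unfold gdet. apply sm_minus. apply sm_mult; [apply g11_smooth | apply g22_smooth].
  apply (sm_ext c (fun q => g12 g q * (g12 g q * 1))). apply sm_mult. apply g12_smooth.
  apply sm_mult. apply g12_smooth. apply sm_const. intros; ring.
Qed.

Lemma sm_a : smooth_on c (fun q => sqrt (gdet g q) / gdet g q).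
Proof.
  apply sm_div. apply sm_sqrt. apply gdet_pos. apply sm_gdet. apply sm_gdet.
  intros p Hp. pose proof (gdet_pos p Hp). lra.
Qed.

Definition Pf (F : fn) : fn := fun q => sqrt (gdet g q) / gdet g q *
                 (g22 g q * dx F q - g12 g q * dy F q).
Definition Qf (F : fn) : fn := fun q => sqrt (gdet g q) / gdet g q *
                 (- g12 g q * dx F q + g11 g q * dy F q).

Lemma lap_PQ F p : lap g F p = / sqrt (gdet g p) * (dx (Pf F) p + dy (Qf F) p).
Proof. reflexivity. Qed.

Lemma sm_Pf F : smooth_on c F -> smooth_on c (Pf F).
Proof.
  intros H. unfold Pf. apply sm_mult. apply sm_a. apply sm_minus; apply sm_mult;
  try apply g12_smooth; try apply g22_smooth. apply sm_dx; auto. apply sm_dy; auto.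
Qed.

Lemma sm_Qf F : smooth_on c F -> smooth_on c (Qf F).
Proof.
  intros H. unfold Qf. apply sm_mult. apply sm_a. apply sm_plus; apply sm_mult;
  try apply g11_smooth. apply sm_opp. apply g12_smooth. apply sm_dx; auto. apply sm_dy; auto.
Qed.

Lemma sm_lap F : smooth_on c F -> smooth_on c (lap g F).
Proof.
  intros H. unfold lap. apply sm_mult. apply sm_inv.
  intros p Hp. pose proof (sqrt_lt_R0 _ (gdet_pos p Hp)). lra.
  apply sm_sqrt. apply gdet_pos. apply sm_gdet.
  apply sm_plus. apply (sm_dx c (Pf F)). apply sm_Pf; auto. apply (sm_dy c (Qf F)). apply sm_Qf; auto.
Qed.

Lemma lap_ext F H p : (forall q, opendisc c q -> F q = H q) -> opendisc c p -> lap g F p = lap g H p.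
Proof.
  intros E Hp. rewrite !lap_PQ. f_equal. f_equal.
  - apply (dx_ext c); auto. intros q Hq. unfold Pf. rewrite (dx_ext c F H q), (dy_ext c F H q); auto.
  - apply (dy_ext c); auto. intros q Hq. unfold Qf. rewrite (dx_ext c F H q), (dy_ext c F H q); auto.
Qed.

Lemma dx_lin F H k q : smooth_on c F -> smooth_on c H -> opendisc c q ->
  dx (fun q => F q + k * H q) q = dx F q + k * dx H q.
Proof.
  intros A B Hq. unfold dx. rewrite Derive_plus. rewrite Derive_scal. reflexivity.
  apply (sm_exx c F q A Hq). apply ex_derive_scal. apply (sm_exx c H q B Hq).
Qed.

Lemma dy_lin F H k q : smooth_on c F -> smooth_on c H -> opendisc c q ->
  dy (fun q => F q + k * H q) q = dy F q + k * dy H q.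
Proof.
  intros A B Hq. unfold dy. rewrite Derive_plus. rewrite Derive_scal. reflexivity.
  apply (sm_exy c F q A Hq). apply ex_derive_scal. apply (sm_exy c H q B Hq).
Qed.

Lemma lap_lin F H k p : smooth_on c F -> smooth_on c H -> opendisc c p ->
  lap g (fun q => F q + k * H q) p = lap g F p + k * lap g H p.
Proof.
  intros A B Hp. rewrite !lap_PQ.
  rewrite (dx_ext c (Pf (fun q => F q + k * H q)) (fun q => Pf F q + k * Pf H q)); auto.
  rewrite (dy_ext c (Qf (fun q => F q + k * H q)) (fun q => Qf F q + k * Qf H q)); auto.
  rewrite dx_lin, dy_lin; auto. ring.
  apply sm_Qf; auto. apply sm_Qf; auto. apply sm_Pf; auto. apply sm_Pf; auto.
  intros q Hq. unfold Qf. rewrite dx_lin, dy_lin; auto. ring.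
  intros q Hq. unfold Pf. rewrite dx_lin, dy_lin; auto. ring.
Qed.

Lemma lap_const a p : lap g (fun _ => a) p = 0.
Proof.
  rewrite lap_PQ.
  assert (HP: forall q, Pf (fun _ => a) q = 0). { intros q. unfold Pf, dx, dy. rewrite !Derive_const. ring. }
  assert (HQ: forall q, Qf (fun _ => a) q = 0). { intros q. unfold Qf, dx, dy. rewrite !Derive_const. ring. }
  unfold dx at 1. rewrite (Derive_ext (fun t => Pf (fun _ => a) (t, snd p)) (fun _ => 0)) by (intros; apply HP).
  unfold dy at 1. rewrite (Derive_ext (fun t => Qf (fun _ => a) (fst p, t)) (fun _ => 0)) by (intros; apply HQ).
  rewrite !Derive_const. rewrite Rplus_0_r. apply Rmult_0_r.
Qed.

End Met.

Definition insq (a b a' b' : R) (q : R * R) := a <= fst q <= b /\ a' <= snd q <= b'.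

Lemma sq_uc a b a' b' (F : fn) : (forall q, insq a b a' b' q -> continuous F q) ->
  forall eps, 0 < eps -> exists d, 0 < d /\ forall q q', insq a b a' b' q -> insq a b a' b' q' ->
  Rabs (fst q - fst q') < d -> Rabs (snd q - snd q') < d -> Rabs (F q - F q') < eps.
Proof.
  intros Hc eps He.
  assert (Ex : forall u v : R, exists e, 0 < e /\ (insq a b a' b' (u,v) -> forall q,
     Rabs (fst q - u) < 2 * e -> Rabs (snd q - v) < 2 * e -> Rabs (F q - F (u,v)) < eps / 2)).
  { intros u v. destruct (classic (insq a b a' b' (u,v))) as [Hin|Hout].
    - destruct (cont2_eps F (u,v) (Hc _ Hin) (eps/2)) as [d [Hd Hq]]. lra.
      exists (d/2). split. lra. intros _ q H1 H2. apply Hq; simpl; lra.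
    - exists 1. split. lra. intros Hin; tauto. }
  pose (del := fun u v => mkposreal (proj1_sig (constructive_indefinite_description _ (Ex u v)))
                (proj1 (proj2_sig (constructive_indefinite_description _ (Ex u v))))).
  assert (Hdel : forall u v, insq a b a' b' (u,v) -> forall q,
     Rabs (fst q - u) < 2 * del u v -> Rabs (snd q - v) < 2 * del u v -> Rabs (F q - F (u,v)) < eps / 2).
  { intros u v. unfold del; simpl. exact (proj2 (proj2_sig (constructive_indefinite_description _ (Ex u v)))). }
  destruct (compactness_value_2d a b a' b' del) as [d Hd].
  exists d. split. apply cond_pos.
  intros [x y] [x' y'] Hq Hq' H1 H2. destruct Hq as [Hx Hy]. cbn [fst snd] in *.
  apply NNPP. intros Hn. apply (Hd x y Hx Hy). intros [u [v [Hu [Hv [A1 [A2 A3]]]]]].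
  apply Hn.
  assert (Huv : insq a b a' b' (u,v)) by (split; simpl; auto).
  pose proof (Hdel u v Huv (x,y)) as B1. cbn [fst snd] in B1.
  pose proof (Hdel u v Huv (x',y')) as B2. cbn [fst snd] in B2.
  assert (0 < del u v) by apply cond_pos.
  assert (Rabs (F (x,y) - F (u,v)) < eps/2).
  { apply B1; lra. }
  assert (Rabs (F (x',y') - F (u,v)) < eps/2).
  { apply B2.
    - replace (x' - u) with ((x' - x) + (x - u)) by ring.
      eapply Rle_lt_trans. apply Rabs_triang. rewrite Rabs_minus_sym in H1. lra.
    - replace (y' - v) with ((y' - y) + (y - v)) by ring.
      eapply Rle_lt_trans. apply Rabs_triang. rewrite Rabs_minus_sym in H2. lra. }
  replace (F (x,y) - F (x',y')) with ((F (x,y) - F (u,v)) - (F (x',y') - F (u,v))) by ring.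
  eapply Rle_lt_trans. apply Rabs_triang. rewrite Rabs_Ropp. lra.
Qed.

Lemma sq_bounded a b a' b' (F : fn) : a <= b -> a' <= b' ->
  (forall q, insq a b a' b' q -> continuous F q) ->
  exists B, forall q, insq a b a' b' q -> Rabs (F q) <= B.
Proof.
  intros Hab Hab' Hc.
  destruct (sq_uc a b a' b' F Hc 1) as [d [Hd Hu]]. lra.
  set (e := d / 2).
  assert (He : 0 < e) by (unfold e; lra).
  assert (Cl : forall n : nat, exists B, forall q, insq a b a' b' q ->
     (fst q - a) + (snd q - a') <= INR n * e -> Rabs (F q) <= B).
  { induction n.
    - exists (Rabs (F (a,a')) + 1). intros [x y] [Hx Hy] Hs. cbn [fst snd] in *. change (INR 0) with 0 in Hs.
      assert (x = a) by lra. assert (y = a') by lra. subst. lra.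
    - destruct IHn as [B HB]. exists (B + 1). intros [x y] [Hx Hy] Hs. cbn [fst snd] in *.
      rewrite S_INR in Hs.
      set (s := (x - a) + (y - a')) in *.
      set (t := Rmin e s).
      assert (Ht1 : t <= e) by apply Rmin_l. assert (Ht2 : t <= s) by apply Rmin_r.
      assert (Ht0 : 0 <= t) by (apply Rmin_glb; unfold s; lra).
      assert (Ht3 : s - t <= INR n * e).
      { unfold t. destruct (Rle_dec e s). rewrite Rmin_left by auto. lra.
        rewrite Rmin_right by lra. pose proof (pos_INR n). nra. }
      set (al := Rmin t (x - a)).
      assert (Hal1 : al <= t) by apply Rmin_l. assert (Hal2 : al <= x - a) by apply Rmin_r.
      assert (Hal0 : 0 <= al) by (apply Rmin_glb; lra).
      assert (Hbe : t - al <= y - a').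
      { unfold al. destruct (Rle_dec t (x - a)). rewrite Rmin_left by auto. lra.
        rewrite Rmin_right by lra. unfold s in Ht2. lra. }
      set (q' := (x - al, y - (t - al))).
      assert (Hq' : insq a b a' b' q') by (unfold q', insq; simpl; lra).
      assert (A := HB q' Hq'). unfold q' in A; simpl in A.
      assert (A' : Rabs (F (x - al, y - (t - al))) <= B) by (apply A; unfold s in Ht3; lra).
      assert (D := Hu (x,y) q' (conj Hx Hy) Hq'). unfold q' in D; simpl in D.
      assert (D' : Rabs (F (x,y) - F (x - al, y - (t - al))) < 1).
      { apply D. replace (x - (x - al)) with al by ring. rewrite Rabs_right; unfold e in *; lra.
        replace (y - (y - (t - al))) with (t - al) by ring. rewrite Rabs_right; unfold e in *; lra. }
      replace (F (x,y)) with ((F (x,y) - F (x - al, y - (t - al))) + F (x - al, y - (t - al))) by ring.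
      eapply Rle_trans. apply Rabs_triang. lra. }
  destruct (INR_archimed e ((b - a) + (b' - a')) He) as [n Hn].
  destruct (Cl n) as [B HB]. exists B. intros q Hq. apply HB; auto.
  destruct Hq. lra.
Qed.

Lemma sq_max a b a' b' (F : fn) : a <= b -> a' <= b' ->
  (forall q, insq a b a' b' q -> continuous F q) ->
  exists q0, insq a b a' b' q0 /\ forall q, insq a b a' b' q -> F q <= F q0.
Proof.
  intros Hab Hab' Hc.
  destruct (sq_bounded a b a' b' F Hab Hab' Hc) as [B HB].
  set (E := fun z => exists q, insq a b a' b' q /\ z = F q).
  assert (Eb : bound E).
  { exists B. intros z [q [Hq ->]]. specialize (HB q Hq). apply Rabs_le_between in HB. lra. }
  assert (Ene : exists z, E z).
  { exists (F (a,a')). exists (a,a'). split; auto. split; simpl; lra. }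
  destruct (completeness E Eb Ene) as [S [HS1 HS2]].
  apply NNPP. intros Hn.
  assert (Hlt : forall q, insq a b a' b' q -> F q < S).
  { intros q Hq. assert (F q <= S) by (apply HS1; exists q; auto).
    destruct H. auto. exfalso. apply Hn. exists q. split; auto. intros q' Hq'.
    rewrite H. apply HS1. exists q'; auto. }
  assert (Hc2 : forall q, insq a b a' b' q -> continuous (fun q => / (S - F q)) q).
  { intros q Hq. apply (continuous_comp (fun q => S - F q) (fun x => / x)).
    apply (continuous_minus (fun _ => S) F). apply continuous_const. auto.
    apply continuous_Rinv. specialize (Hlt q Hq). lra. }
  destruct (sq_bounded a b a' b' _ Hab Hab' Hc2) as [B' HB'].
  assert (Hq0 : insq a b a' b' (a,a')) by (split; simpl; lra).
  assert (HB'0 : 0 < B').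
  { specialize (HB' _ Hq0). specialize (Hlt _ Hq0).
    assert (0 < / (S - F (a,a'))) by (apply Rinv_0_lt_compat; lra).
    rewrite Rabs_right in HB'; lra. }
  assert (Hub : is_upper_bound E (S - / B')).
  { intros z [q [Hq ->]]. specialize (HB' q Hq). specialize (Hlt q Hq).
    assert (0 < / (S - F q)) by (apply Rinv_0_lt_compat; lra).
    rewrite Rabs_right in HB' by lra.
    assert (/ B' <= S - F q).
    { replace (S - F q) with (/ / (S - F q)) by (field; lra).
      apply Rinv_le_contravar; auto. }
    lra. }
  specialize (HS2 _ Hub). assert (0 < / B') by (apply Rinv_0_lt_compat; lra). lra.
Qed.

Lemma isd_cont f x l : is_derive f x l -> continuity_pt f x.
Proof.
  intros H. apply continuity_pt_filterlim. apply (ex_derive_continuous (K:=R_AbsRing) (V:=R_NormedModule)). exists l; auto.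
Qed.

Lemma mvt (F F1 : R -> R) a b :
  (forall t, Rmin a b <= t <= Rmax a b -> is_derive F t (F1 t)) ->
  exists z, Rmin a b <= z <= Rmax a b /\ F b - F a = F1 z * (b - a).
Proof.
  intros H. apply MVT_gen.
  intros t Ht. apply H; lra.
  intros t Ht. apply (isd_cont _ _ (F1 t)). apply H; auto.
Qed.

Lemma taylor_lb (F F1 F2 : R -> R) x0 h m :
  (forall t, Rmin x0 (x0+h) <= t <= Rmax x0 (x0+h) ->
     is_derive F t (F1 t) /\ is_derive F1 t (F2 t) /\ m <= F2 t) ->
  F (x0+h) - F x0 - h * F1 x0 >= m * h^2 / 2.
Proof.
  intros H.
  set (G := fun t => F t - (F x0 + (t - x0) * F1 x0 + m * (t - x0)^2 / 2)).
  assert (DP : forall t, is_derive (fun t => F x0 + (t - x0) * F1 x0 + m * (t - x0)^2 / 2) t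
                 (F1 x0 + m * (t - x0))).
  { intros t. auto_derive. exact I. unfold Rminus. field. }
  destruct (mvt G (fun t => F1 t - (F1 x0 + m * (t - x0))) x0 (x0+h)) as [z [Hz Ez]].
  { intros t Ht. exact (is_derive_minus _ _ t _ _ (proj1 (H t Ht)) (DP t)). }
  assert (Hx0 : Rmin x0 (x0+h) <= x0 <= Rmax x0 (x0+h)) by (split; [apply Rmin_l|apply Rmax_l]).
  assert (Hsub : forall t, Rmin x0 z <= t <= Rmax x0 z -> Rmin x0 (x0+h) <= t <= Rmax x0 (x0+h)).
  { intros t Ht. unfold Rmin, Rmax in *. repeat destruct Rle_dec; lra. }
  destruct (mvt F1 F2 x0 z) as [y [Hy Ey]].
  { intros t Ht. apply (proj1 (proj2 (H t (Hsub t Ht)))). }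
  assert (Hm : m <= F2 y) by apply (H y (Hsub y Hy)).
  assert (Hzh : 0 <= (z - x0) * h).
  { unfold Rmin, Rmax in Hz. destruct Rle_dec in Hz; nra. }
  unfold G in Ez. cbv beta in Ez.
  replace (x0 - x0) with 0 in Ez by ring.
  assert (E3 : F (x0 + h) - F x0 - h * F1 x0 - m * h^2/2 = (F2 y - m) * ((z - x0) * h)).
  { replace (x0 + h - x0) with h in Ez by ring. assert (E4 : F1 z = F1 x0 + F2 y * (z - x0)) by lra. rewrite E4 in Ez. lra. }
  assert (0 <= (F2 y - m) * ((z - x0) * h)) by (apply Rmult_le_pos; lra).
  lra.
Qed.

Lemma isdx r w x y : smooth_on r w -> opendisc r (x,y) -> is_derive (fun t => w (t, y)) x (dx w (x,y)).
Proof. intros H Hp. exact (Derive_correct _ _ (sm_exx r w (x,y) H Hp)). Qed.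
Lemma isdy r w x y : smooth_on r w -> opendisc r (x,y) -> is_derive (fun t => w (x, t)) y (dy w (x,y)).
Proof. intros H Hp. exact (Derive_correct _ _ (sm_exy r w (x,y) H Hp)). Qed.

Lemma between_abs x0 h s : Rmin x0 (x0+h) <= s <= Rmax x0 (x0+h) -> Rabs (s - x0) <= Rabs h.
Proof.
  intros Hs. unfold Rmin, Rmax in Hs. destruct Rle_dec in Hs.
  rewrite !Rabs_right; lra. rewrite Rabs_left1 by lra. rewrite (Rabs_left1 h) by lra. lra.
Qed.

Lemma first_zero r w x0 y0 e : smooth_on r w -> 0 < e ->
  (forall q, Rabs (fst q - x0) < e -> Rabs (snd q - y0) < e -> opendisc r q /\ w q <= w (x0,y0)) ->
  dx w (x0,y0) = 0 /\ dy w (x0,y0) = 0.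
Proof.
  intros Hw He Hb.
  assert (in0 : opendisc r (x0,y0)). { apply Hb; simpl; rewrite Rminus_diag, Rabs_R0; auto. }
  split.
  - pose proof (ex_derive_Reals_0 _ _ (sm_exx r w (x0,y0) Hw in0)) as pr.
    pose proof (deriv_maximum _ (x0 - e) (x0 + e) x0 pr) as D.
    rewrite Derive_Reals in D. apply D; try lra.
    intros t H1 H2. apply (Hb (t, y0)); simpl. apply Rabs_def1; lra.
    rewrite Rminus_diag, Rabs_R0; auto.
  - pose proof (ex_derive_Reals_0 _ _ (sm_exy r w (x0,y0) Hw in0)) as pr.
    pose proof (deriv_maximum _ (y0 - e) (y0 + e) y0 pr) as D.
    rewrite Derive_Reals in D. apply D; try lra.
    intros t H1 H2. apply (Hb (x0, t)); simpl.
    rewrite Rminus_diag, Rabs_R0; auto. apply Rabs_def1; lra.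
Qed.

Lemma hess r w x0 y0 e : smooth_on r w -> 0 < e ->
  (forall q, Rabs (fst q - x0) < e -> Rabs (snd q - y0) < e -> opendisc r q /\ w q <= w (x0,y0)) ->
  dx w (x0,y0) = 0 -> dy w (x0,y0) = 0 ->
  forall v1 v2, v1^2 * dx (dx w) (x0,y0) + 2*v1*v2 * dx (dy w) (x0,y0) + v2^2 * dy (dy w) (x0,y0) <= 0.
Proof.
  intros Hw He Hb Hx Hy v1 v2.
  set (Hxx := dx (dx w) (x0,y0)). set (Hc := dx (dy w) (x0,y0)). set (Hyy := dy (dy w) (x0,y0)).
  apply Rnot_lt_le. intros HQ.
  set (QQ := v1^2 * Hxx + 2*v1*v2 * Hc + v2^2 * Hyy) in *.
  set (NN := v1^2 + v2^2 + 2 * Rabs (v1*v2)).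
  assert (HN : 0 < NN).
  { unfold NN. pose proof (Rabs_pos (v1*v2)).
    destruct (Req_dec v1 0). subst v1. destruct (Req_dec v2 0). subst v2. unfold QQ in HQ. lra.
    nra. nra. }
  set (eps := QQ / (2 * NN)).
  assert (Heps : 0 < eps) by (unfold eps; apply Rdiv_lt_0_compat; lra).
  assert (in0 : opendisc r (x0,y0)). { apply Hb; simpl; rewrite Rminus_diag, Rabs_R0; auto. }
  destruct (cont2_eps (dx (dx w)) (x0,y0) (sm_C0 r _ (sm_dx r _ (sm_dx r w Hw)) _ in0) eps Heps) as [d1 [Hd1 C1]].
  destruct (cont2_eps (dx (dy w)) (x0,y0) (sm_C0 r _ (sm_dx r _ (sm_dy r w Hw)) _ in0) eps Heps) as [d2 [Hd2 C2]].
  destruct (cont2_eps (dy (dy w)) (x0,y0) (sm_C0 r _ (sm_dy r _ (sm_dy r w Hw)) _ in0) eps Heps) as [d3 [Hd3 C3]].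
  set (rho := Rmin e (Rmin d1 (Rmin d2 d3))).
  assert (Hr1 : rho <= e) by apply Rmin_l.
  assert (Hr2 : rho <= d1) by (eapply Rle_trans; [apply Rmin_r|apply Rmin_l]).
  assert (Hr3 : rho <= d2) by (eapply Rle_trans; [apply Rmin_r|]; eapply Rle_trans; [apply Rmin_r|apply Rmin_l]).
  assert (Hr4 : rho <= d3) by (eapply Rle_trans; [apply Rmin_r|]; eapply Rle_trans; [apply Rmin_r|apply Rmin_r]).
  assert (Hr0 : 0 < rho) by (unfold rho; repeat apply Rmin_pos; auto).
  pose proof (Rabs_pos v1) as Pv1. pose proof (Rabs_pos v2) as Pv2.
  set (t := rho / (2 * (Rabs v1 + Rabs v2 + 1))).
  assert (Ht : 0 < t) by (unfold t; apply Rdiv_lt_0_compat; lra).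
  assert (Ht2 : t * (Rabs v1 + Rabs v2 + 1) = rho / 2) by (unfold t; field; lra).
  set (h := t * v1). set (k := t * v2).
  assert (Hh : Rabs h < rho) by (unfold h; rewrite Rabs_mult, (Rabs_right t) by lra; nra).
  assert (Hk : Rabs k < rho) by (unfold k; rewrite Rabs_mult, (Rabs_right t) by lra; nra).
  assert (A : w (x0+h, y0) - w (x0, y0) - h * dx w (x0,y0) >= (Hxx - eps) * h^2 / 2).
  { apply (taylor_lb (fun s => w (s,y0)) (fun s => dx w (s,y0)) (fun s => dx (dx w) (s,y0))).
    intros s Hs. pose proof (between_abs _ _ _ Hs) as Hs'.
    assert (Hin : opendisc r (s,y0)). { apply Hb; simpl. lra. rewrite Rminus_diag, Rabs_R0; auto. }
    split. apply (isdx r); auto. split. apply (isdx r (dx w)); auto. apply sm_dx; auto.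
    assert (Rabs (dx (dx w) (s,y0) - Hxx) < eps). { apply C1; simpl. lra. rewrite Rminus_diag, Rabs_R0; auto. }
    apply Rabs_def2 in H. lra. }
  destruct (mvt (fun s => dy w (s,y0)) (fun s => dx (dy w) (s,y0)) x0 (x0+h)) as [z [Hz B]].
  { intros s Hs. pose proof (between_abs _ _ _ Hs) as Hs'.
    assert (Hin : opendisc r (s,y0)). { apply Hb; simpl. lra. rewrite Rminus_diag, Rabs_R0; auto. }
    apply (isdx r (dy w)); auto. apply sm_dy; auto. }
  assert (Cz : Rabs (dx (dy w) (z,y0) - Hc) < eps).
  { pose proof (between_abs _ _ _ Hz). apply C2; simpl. lra. rewrite Rminus_diag, Rabs_R0; auto. }
  assert (C : w (x0+h, y0+k) - w (x0+h, y0) - k * dy w (x0+h,y0) >= (Hyy - eps) * k^2 / 2).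
  { apply (taylor_lb (fun s => w (x0+h,s)) (fun s => dy w (x0+h,s)) (fun s => dy (dy w) (x0+h,s))).
    intros s Hs. pose proof (between_abs _ _ _ Hs) as Hs'.
    assert (Hin : opendisc r (x0+h,s)). { apply Hb; simpl. replace (x0+h-x0) with h by ring. lra. lra. }
    split. apply (isdy r); auto. split. apply (isdy r (dy w)); auto. apply sm_dy; auto.
    assert (Rabs (dy (dy w) (x0+h,s) - Hyy) < eps).
    { apply C3; simpl. replace (x0+h-x0) with h by ring. lra. lra. }
    apply Rabs_def2 in H. lra. }
  assert (Wm : w (x0+h, y0+k) <= w (x0,y0)).
  { apply Hb; simpl. replace (x0+h-x0) with h by ring. lra. replace (y0+k-y0) with k by ring. lra. }
  rewrite Hx in A. rewrite Hy in B. replace (x0 + h - x0) with h in B by ring.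
  set (Cv := dx (dy w) (z,y0)) in *.
  assert (P1 : v1*v2*Cv >= v1*v2*Hc - Rabs (v1*v2) * eps).
  { assert (- (v1*v2*(Cv - Hc)) <= Rabs (v1*v2) * Rabs (Cv - Hc)).
    { rewrite <- Rabs_mult. rewrite <- Rabs_Ropp. apply Rle_abs. }
    assert (Rabs (v1*v2) * Rabs (Cv - Hc) <= Rabs (v1*v2) * eps).
    { apply Rmult_le_compat_l. apply Rabs_pos. lra. }
    lra. }
  set (SS := v1^2 * (Hxx - eps)/2 + v2^2 * (Hyy - eps)/2 + v1*v2*Cv).
  assert (E1 : 0 >= t^2 * SS).
  { assert (dy w (x0 + h, y0) = Cv * h) by lra.
    assert (Eq : (Hxx - eps) * h^2 / 2 + (Hyy - eps) * k^2/2 + k * (Cv * h) = t^2 * SS :> R).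
    { unfold SS, h, k. field. }
    rewrite <- Eq. rewrite <- H. lra. }
  assert (E2 : eps * NN = QQ / 2) by (unfold eps; field; lra).
  assert (E3 : SS >= QQ / 4).
  { unfold SS. unfold NN in E2. unfold QQ in E2 |- *. lra. }
  assert (0 < t^2 * SS). { apply Rmult_lt_0_compat. nra. lra. }
  lra.
Qed.

Lemma dx_crit r A B C U V x y : smooth_on r A -> smooth_on r B -> smooth_on r C ->
  smooth_on r U -> smooth_on r V -> opendisc r (x,y) -> U (x,y) = 0 -> V (x,y) = 0 ->
  dx (fun q => A q * (B q * U q - C q * V q)) (x,y) = A (x,y) * (B (x,y) * dx U (x,y) - C (x,y) * dx V (x,y)).
Proof.
  intros HA HB HC HU HV Hp E1 E2. unfold dx; simpl.
  pose proof (sm_exx r A (x,y) HA Hp) as DA. pose proof (sm_exx r B (x,y) HB Hp) as DB.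
  pose proof (sm_exx r C (x,y) HC Hp) as DC. pose proof (sm_exx r U (x,y) HU Hp) as DU.
  pose proof (sm_exx r V (x,y) HV Hp) as DV. simpl in *.
  rewrite Derive_mult; auto.
  rewrite Derive_minus. rewrite !Derive_mult; auto. rewrite E1, E2. ring.
  apply ex_derive_mult; auto. apply ex_derive_mult; auto.
  exact (ex_derive_minus (fun t => B (t,y) * U (t,y)) (fun t => C (t,y) * V (t,y)) x
     (ex_derive_mult _ _ _ DB DU) (ex_derive_mult _ _ _ DC DV)).
Qed.

Lemma dy_crit r A B C U V x y : smooth_on r A -> smooth_on r B -> smooth_on r C ->
  smooth_on r U -> smooth_on r V -> opendisc r (x,y) -> U (x,y) = 0 -> V (x,y) = 0 ->
  dy (fun q => A q * (- B q * U q + C q * V q)) (x,y) = A (x,y) * (- B (x,y) * dy U (x,y) + C (x,y) * dy V (x,y)).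
Proof.
  intros HA HB HC HU HV Hp E1 E2. unfold dy; simpl.
  pose proof (sm_exy r A (x,y) HA Hp) as DA. pose proof (sm_exy r B (x,y) HB Hp) as DB.
  pose proof (sm_exy r C (x,y) HC Hp) as DC. pose proof (sm_exy r U (x,y) HU Hp) as DU.
  pose proof (sm_exy r V (x,y) HV Hp) as DV. simpl in *.
  assert (DB' : ex_derive (fun t => - B (x,t)) y) by exact (ex_derive_opp _ _ DB).
  rewrite Derive_mult; auto.
  rewrite Derive_plus. rewrite !Derive_mult; auto. rewrite Derive_opp. rewrite E1, E2. ring.
  apply ex_derive_mult; auto. apply ex_derive_mult; auto.
  exact (ex_derive_plus (fun t => - B (x,t) * U (x,t)) (fun t => C (x,t) * V (x,t)) y
     (ex_derive_mult _ _ _ DB' DU) (ex_derive_mult _ _ _ DC DV)).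
Qed.

Lemma cont2d r F x y : smooth_on r F -> opendisc r (x,y) -> continuity_2d_pt (fun u v => F (u,v)) x y.
Proof.
  intros H Hp. apply continuity_2d_pt_filterlim.
  apply (filterlim_ext F). intros [u v]; reflexivity.
  apply (sm_C0 r F H (x,y) Hp).
Qed.

Lemma schwarz_w r w x0 y0 e : smooth_on r w -> 0 < e ->
  (forall q, Rabs (fst q - x0) < e -> Rabs (snd q - y0) < e -> opendisc r q) ->
  dy (dx w) (x0,y0) = dx (dy w) (x0,y0).
Proof.
  intros Hw He Hb.
  assert (in0 : opendisc r (x0,y0)). { apply Hb; simpl; rewrite Rminus_diag, Rabs_R0; auto. }
  symmetry.
  refine (Schwarz (fun u v => w (u,v)) x0 y0 _ _ _).
  - exists (mkposreal e He). intros u v Hu Hv. assert (Hi : opendisc r (u,v)) by (apply Hb; auto).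
    split. exact (sm_exx r w (u,v) Hw Hi). split. exact (sm_exy r w (u,v) Hw Hi).
    split. exact (sm_exx r (dy w) (u,v) (sm_dy r w Hw) Hi). exact (sm_exy r (dx w) (u,v) (sm_dx r w Hw) Hi).
  - exact (cont2d r (dx (dy w)) x0 y0 (sm_dx r _ (sm_dy r w Hw)) in0).
  - exact (cont2d r (dy (dx w)) x0 y0 (sm_dy r _ (sm_dx r w Hw)) in0).
Qed.

Lemma lap_max c (g : metric c) w x0 y0 e : smooth_on c w -> 0 < e ->
  (forall q, Rabs (fst q - x0) < e -> Rabs (snd q - y0) < e -> opendisc c q /\ w q <= w (x0,y0)) ->
  lap g w (x0,y0) <= 0.
Proof.
  intros Hw He Hb.
  assert (in0 : opendisc c (x0,y0)). { apply Hb; simpl; rewrite Rminus_diag, Rabs_R0; auto. }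
  destruct (first_zero c w x0 y0 e Hw He Hb) as [Hx Hy].
  pose proof (hess c w x0 y0 e Hw He Hb Hx Hy) as Hq.
  pose proof (schwarz_w c w x0 y0 e Hw He (fun q H1 H2 => proj1 (Hb q H1 H2))) as Sw.
  rewrite lap_PQ. unfold Pf, Qf.
  rewrite (dx_crit c (fun q => sqrt (gdet g q) / gdet g q) (g22 g) (g12 g) (dx w) (dy w)); auto;
    [| apply sm_a | apply g22_smooth | apply g12_smooth | apply sm_dx; auto | apply sm_dy; auto].
  rewrite (dy_crit c (fun q => sqrt (gdet g q) / gdet g q) (g12 g) (g11 g) (dx w) (dy w)); auto;
    [| apply sm_a | apply g12_smooth | apply g11_smooth | apply sm_dx; auto | apply sm_dy; auto].
  rewrite Sw.
  set (Hxx := dx (dx w) (x0,y0)) in *. set (Hc := dx (dy w) (x0,y0)) in *. set (Hyy := dy (dy w) (x0,y0)) in *.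
  pose proof (Hq (g22 g (x0,y0)) (- g12 g (x0,y0))) as Q1.
  pose proof (Hq 0 1) as Q2.
  pose proof (gdet_pos c g _ in0) as Hd. pose proof (g22_pos c g _ in0) as H22.
  unfold gdet in *.
  set (a11 := g11 g (x0,y0)) in *. set (a12 := g12 g (x0,y0)) in *. set (a22 := g22 g (x0,y0)) in *.
  set (D := a11 * a22 - a12^2) in *.
  assert (Hs : 0 < sqrt D) by (apply sqrt_lt_R0; auto).
  assert (Br : a22 * (a22 * Hxx - 2 * a12 * Hc + a11 * Hyy) <= 0).
  { replace (a22 * (a22 * Hxx - 2 * a12 * Hc + a11 * Hyy)) with
       (a22 ^ 2 * Hxx + 2 * a22 * - a12 * Hc + (- a12)^2 * Hyy + D * Hyy) by (unfold D; ring).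
    assert (0^2 * Hxx + 2 * 0 * 1 * Hc + 1^2 * Hyy = Hyy) by ring.
    assert (D * Hyy <= 0) by nra. lra. }
  assert (Br2 : a22 * Hxx - 2 * a12 * Hc + a11 * Hyy <= 0) by nra.
  replace (/ sqrt D * (sqrt D / D * (a22 * Hxx - a12 * Hc) + sqrt D / D * (- a12 * Hc + a11 * Hyy)))
    with (/ D * (a22 * Hxx - 2 * a12 * Hc + a11 * Hyy)) by (field; lra).
  assert (0 < / D) by (apply Rinv_0_lt_compat; auto).
  nra.
Qed.

Definition phi (p : R * R) : fn := fun q => (fst q - fst p)^2 + (snd q - snd p)^2.

Lemma sm_phi c p : smooth_on c (phi p).
Proof.
  apply (sm_ext c (fun q => (fst q - fst p) * (fst q - fst p) + (snd q - snd p) * (snd q - snd p))).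
  apply sm_plus; apply sm_mult; apply sm_minus; try apply sm_fst; try apply sm_snd; apply sm_const.
  intros q _. unfold phi. ring.
Qed.

Lemma core c (g : metric c) u p r k delta :
  0 < r -> 0 < k -> smooth_on c u ->
  (forall q, insq (fst p - r) (fst p + r) (snd p - r) (snd p + r) q -> opendisc c q) ->
  (forall q, insq (fst p - r) (fst p + r) (snd p - r) (snd p + r) q -> Rabs (u q) <= delta) ->
  k * r^2 > 2 * delta ->
  (forall q, insq (fst p - r) (fst p + r) (snd p - r) (snd p + r) q -> 0 < lap g u q - k * lap g (phi p) q) ->
  False.
Proof.
  intros Hr Hk Hu Hin Hb Hkr Hpos.
  destruct p as [px py]. cbn [fst snd] in *.
  set (w := fun q => u q + (-k) * phi (px,py) q).
  assert (Hw : smooth_on c w) by (apply sm_plus; auto; apply sm_mult; [apply sm_const|apply sm_phi]).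
  destruct (sq_max (px - r) (px + r) (py - r) (py + r) w) as [[x0 y0] [Hq0 Hmax]]; try lra.
  { intros q Hq. apply (sm_C0 c w Hw). auto. }
  assert (Hp : insq (px - r) (px + r) (py - r) (py + r) (px,py)) by (split; simpl; lra).
  assert (W0 : w (x0,y0) >= - delta).
  { specialize (Hmax _ Hp). assert (E : w (px,py) = u (px,py)) by (unfold w, phi; simpl; ring).
    specialize (Hb _ Hp). apply Rabs_le_between in Hb. lra. }
  destruct Hq0 as [Hx0 Hy0]. cbn [fst snd] in *.
  assert (Bd : forall x y, insq (px - r) (px + r) (py - r) (py + r) (x,y) ->
      (Rabs (x - px) = r \/ Rabs (y - py) = r) -> w (x,y) < - delta).
  { intros x y Hq Hor. unfold w, phi. simpl.
    specialize (Hb _ Hq). apply Rabs_le_between in Hb.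
    assert (r^2 <= (x - px)^2 + (y - py)^2).
    { destruct Hor as [E|E]; rewrite <- E; rewrite <- !pow2_abs with (x := x - px), <- pow2_abs with (x := y - py);
      rewrite ?E; nra. }
    nra. }
  assert (Ix : Rabs (x0 - px) < r).
  { destruct (Rle_lt_dec r (Rabs (x0 - px))) as [H|H]; auto.
    exfalso. assert (Rabs (x0 - px) <= r) by (apply Rabs_le; lra).
    assert (w (x0,y0) < - delta) by (apply Bd; [split; simpl; lra | left; lra]). lra. }
  assert (Iy : Rabs (y0 - py) < r).
  { destruct (Rle_lt_dec r (Rabs (y0 - py))) as [H|H]; auto.
    exfalso. assert (Rabs (y0 - py) <= r) by (apply Rabs_le; lra).
    assert (w (x0,y0) < - delta) by (apply Bd; [split; simpl; lra | right; lra]). lra. }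
  set (e := Rmin (r - Rabs (x0 - px)) (r - Rabs (y0 - py))).
  assert (He : 0 < e) by (apply Rmin_pos; lra).
  assert (Box : forall q, Rabs (fst q - x0) < e -> Rabs (snd q - y0) < e ->
      insq (px - r) (px + r) (py - r) (py + r) q).
  { intros [x y] H1 H2. cbn [fst snd] in *.
    assert (e <= r - Rabs (x0 - px)) by apply Rmin_l. assert (e <= r - Rabs (y0 - py)) by apply Rmin_r.
    assert (Rabs (x - px) < r).
    { replace (x - px) with ((x - x0) + (x0 - px)) by ring. eapply Rle_lt_trans. apply Rabs_triang. lra. }
    assert (Rabs (y - py) < r).
    { replace (y - py) with ((y - y0) + (y0 - py)) by ring. eapply Rle_lt_trans. apply Rabs_triang. lra. }
    apply Rabs_def2 in H3. apply Rabs_def2 in H4. split; simpl; lra. }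
  assert (L : lap g w (x0,y0) <= 0).
  { apply (lap_max c g w x0 y0 e Hw He). intros q H1 H2. split. apply Hin. apply Box; auto.
    apply Hmax. apply Box; auto. }
  unfold w in L. rewrite (lap_lin c g u (phi (px,py)) (-k)) in L; auto.
  specialize (Hpos (x0,y0) (conj Hx0 Hy0)). lra.
  apply sm_phi. apply Hin. split; simpl; lra.
Qed.

Lemma cmod_le a b : sqrt (a^2 + b^2) <= Rabs a + Rabs b.
Proof.
  pose proof (Rabs_pos a); pose proof (Rabs_pos b).
  rewrite <- (sqrt_pow2 (Rabs a + Rabs b)) by lra.
  apply sqrt_le_1_alt. rewrite <- (pow2_abs a), <- (pow2_abs b). nra.
Qed.

Lemma K_in c q : 0 < c -> insq (-(c/2)) (c/2) (-(c/2)) (c/2) q -> opendisc c q.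
Proof.
  intros Hc [[H1 H2] [H3 H4]]. unfold opendisc. nra.
Qed.

Lemma abs_small c x y : 0 < c -> opendisc (c/4) (x,y) -> Rabs x < c/4 /\ Rabs y < c/4.
Proof.
  intros Hc H. unfold opendisc in H; simpl in H.
  split; apply Rabs_def1; nra.
Qed.

Lemma covnorm_prop c (g : metric c) q a b : opendisc c q ->
  0 <= covnorm2 g q a b /\ a^2 + b^2 <= (g11 g q + g22 g q) * covnorm2 g q a b.
Proof.
  intros Hq. pose proof (g_posdef c g q Hq) as [P1 P2].
  unfold covnorm2.
  set (a11 := g11 g q) in *. set (a12 := g12 g q) in *. set (a22 := g22 g q) in *.
  unfold gdet. fold a11 a12 a22.
  set (D := a11 * a22 - a12^2) in *.
  set (Nm := a22 * a^2 - 2 * a12 * a * b + a11 * b^2).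
  assert (HN : 0 <= Nm).
  { assert (E : a11 * Nm = (a11 * b - a12 * a)^2 + D * a^2) by (unfold Nm, D; ring).
    pose proof (pow2_ge_0 (a11 * b - a12 * a)). assert (0 <= D * a^2) by (apply Rmult_le_pos; [lra|apply pow2_ge_0]).
    destruct (Rle_lt_dec 0 Nm); auto. exfalso. assert (a11 * Nm < 0) by (apply Rmult_pos_neg; auto). lra. }
  assert (Id : (a11 + a22) * Nm - D * (a^2 + b^2) = (a22 * a - a12 * b)^2 + (a11 * b - a12 * a)^2)
    by (unfold Nm, D; ring).
  split. apply Rdiv_le_0_compat; lra.
  replace ((a11 + a22) * (Nm / D)) with (((a11 + a22) * Nm) / D) by (field; lra).
  apply Rmult_le_reg_r with D; auto.
  replace ((a11 + a22) * Nm / D * D) with ((a11 + a22) * Nm) by (field; lra).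
  pose proof (pow2_ge_0 (a22 * a - a12 * b)). pose proof (pow2_ge_0 (a11 * b - a12 * a)). lra.
Qed.

Lemma osc c L G px py qx qy : 0 < c -> smooth_on c L ->
  (forall z, insq (-(c/2)) (c/2) (-(c/2)) (c/2) z -> Rabs (dx L z) <= G /\ Rabs (dy L z) <= G) ->
  insq (-(c/2)) (c/2) (-(c/2)) (c/2) (px,py) -> insq (-(c/2)) (c/2) (-(c/2)) (c/2) (qx,qy) ->
  Rabs (L (qx,qy) - L (px,py)) <= G * Rabs (qx - px) + G * Rabs (qy - py).
Proof.
  intros Hc HL HG [[P1 P2] [P3 P4]] [[Q1 Q2] [Q3 Q4]]. cbn [fst snd] in *.
  destruct (mvt (fun t => L (t,py)) (fun t => dx L (t,py)) px qx) as [z [Hz Ez]].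
  { intros t Ht. apply (isdx c). auto. apply K_in; auto.
    unfold Rmin, Rmax in Ht; destruct Rle_dec in Ht; split; simpl; lra. }
  destruct (mvt (fun t => L (qx,t)) (fun t => dy L (qx,t)) py qy) as [z' [Hz' Ez']].
  { intros t Ht. apply (isdy c). auto. apply K_in; auto.
    unfold Rmin, Rmax in Ht; destruct Rle_dec in Ht; split; simpl; lra. }
  assert (G1 : Rabs (dx L (z,py)) <= G).
  { apply HG. unfold Rmin, Rmax in Hz; destruct Rle_dec in Hz; split; simpl; lra. }
  assert (G2 : Rabs (dy L (qx,z')) <= G).
  { apply HG. unfold Rmin, Rmax in Hz'; destruct Rle_dec in Hz'; split; simpl; lra. }
  replace (L (qx,qy) - L (px,py)) with ((L (qx,qy) - L (qx,py)) + (L (qx,py) - L (px,py))) by ring.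
  rewrite Ez, Ez'. eapply Rle_trans. apply Rabs_triang. rewrite !Rabs_mult.
  pose proof (Rabs_pos (qy - py)). pose proof (Rabs_pos (qx - px)). nra.
Qed.

Lemma im_le_Cmod' (z : C) : Rabs (Im z) <= Cmod z.
Proof.
  destruct z as [x y]. unfold Cmod, Im; simpl.
  rewrite <- (sqrt_pow2 (Rabs y)) by apply Rabs_pos. rewrite pow2_abs.
  apply sqrt_le_1_alt. pose proof (pow2_ge_0 x). lra.
Qed.

Lemma bound_comp c (g : metric c) u delta r k G Bp p :
  0 < r -> 0 < k -> smooth_on c u -> k * r^2 > 2 * delta ->
  (forall q, opendisc c q -> Rabs (u q) <= delta) ->
  (forall q, insq (fst p - r) (fst p + r) (snd p - r) (snd p + r) q -> opendisc c q) ->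
  (forall q, insq (fst p - r) (fst p + r) (snd p - r) (snd p + r) q -> Rabs (lap g u q - lap g u p) <= 2 * r * G) ->
  (forall q, insq (fst p - r) (fst p + r) (snd p - r) (snd p + r) q -> Rabs (lap g (phi p) q) <= Bp) ->
  Rabs (lap g u p) <= 2 * r * G + k * Bp.
Proof.
  intros Hr Hk Hu Hkr Hd Hin Hosc HB.
  apply Rabs_le. split.
  - apply Rnot_lt_le. intros Hlt.
    set (u' := fun q => (fun _ => 0) q + (-1) * u q).
    assert (Hu' : smooth_on c u') by (apply sm_plus; [apply sm_const| apply sm_mult; [apply sm_const|auto]]).
    apply (core c g u' p r k delta Hr Hk Hu' Hin).
    + intros q Hq. unfold u'. specialize (Hd q (Hin q Hq)). 
      replace (0 + -1 * u q) with (- u q) by ring. rewrite Rabs_Ropp; auto.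
    + auto.
    + intros q Hq. unfold u'. rewrite (lap_lin c g (fun _ => 0) u (-1)); auto; [|apply sm_const].
      rewrite lap_const.
      specialize (Hosc q Hq). specialize (HB q Hq). apply Rabs_le_between in Hosc. apply Rabs_le_between in HB.
      nra.
  - apply Rnot_lt_le. intros Hlt.
    apply (core c g u p r k delta Hr Hk Hu Hin).
    + intros q Hq. apply Hd; auto.
    + auto.
    + intros q Hq.
      specialize (Hosc q Hq). specialize (HB q Hq). apply Rabs_le_between in Hosc. apply Rabs_le_between in HB.
      nra.
Qed.

Theorem lemma4 (c delta M : R) (hc : 0 < c) (hdelta : 0 < delta) (hM : 0 < M)
  (g : metric c) :
  exists lambda : R,
    forall f : (R * R)%type -> C,
      smoothC_on c f ->
      (forall p, opendisc c p -> Cmod (f p) <= delta) ->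
      (forall p, opendisc c p -> dnormC g (lapC g f) p <= M) ->
      forall p, opendisc (c / 4) p -> Cmod (lapC g f p) <= lambda.
Proof.
  set (a := -(c/2)). set (b := c/2).
  assert (Hab : a <= b) by (unfold a, b; lra).
  assert (HK : forall q, insq a b a b q -> opendisc c q) by (intros; apply K_in; auto).
  assert (HK0 : insq a b a b (0,0)) by (unfold a, b; split; simpl; lra).
  destruct (sq_bounded a b a b (fun q => g11 g q + g22 g q) Hab Hab) as [T HT].
  { intros q Hq. apply (sm_C0 c). apply sm_plus; [apply g11_smooth|apply g22_smooth]. auto. }
  destruct (sq_bounded a b a b (lap g (phi (0,0))) Hab Hab) as [B0 HB0].
  { intros q Hq. apply (sm_C0 c). apply sm_lap. apply sm_phi. auto. }
  destruct (sq_bounded a b a b (lap g fst) Hab Hab) as [B1 HB1].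
  { intros q Hq. apply (sm_C0 c). apply sm_lap. apply sm_fst. auto. }
  destruct (sq_bounded a b a b (lap g snd) Hab Hab) as [B2 HB2].
  { intros q Hq. apply (sm_C0 c). apply sm_lap. apply sm_snd. auto. }
  assert (HB1p : 0 <= B1) by (eapply Rle_trans; [apply Rabs_pos|apply (HB1 _ HK0)]).
  assert (HB2p : 0 <= B2) by (eapply Rle_trans; [apply Rabs_pos|apply (HB2 _ HK0)]).
  set (r := c / 4).
  assert (Hr : 0 < r) by (unfold r; lra).
  set (k := 3 * delta / r^2).
  assert (Hk : 0 < k) by (unfold k; apply Rdiv_lt_0_compat; [lra| apply pow_lt; lra]).
  assert (Hkr : k * r^2 > 2 * delta).
  { unfold k. replace (3 * delta / r^2 * r^2) with (3 * delta) by (field; lra). lra. }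
  set (G := T * M^2 + 1).
  set (Bp := B0 + c * (B1 + B2)).
  exists (2 * (2 * r * G + k * Bp)).
  intros f [HsR HsI] Hf Hn p Hp.
  destruct p as [px py].
  destruct (abs_small c px py hc Hp) as [Hpx Hpy].
  apply Rabs_def2 in Hpx. apply Rabs_def2 in Hpy.
  assert (Sq : forall q, insq (fst (px,py) - r) (fst (px,py) + r) (snd (px,py) - r) (snd (px,py) + r) q -> insq a b a b q).
  { intros [x y] [[H1 H2] [H3 H4]]. cbn [fst snd] in *. unfold a, b, r in *. split; simpl; lra. }
  assert (Hp' : insq a b a b (px,py)) by (unfold a, b; split; simpl; lra).
  assert (HBp : forall q, insq (fst (px,py) - r) (fst (px,py) + r) (snd (px,py) - r) (snd (px,py) + r) q ->
                Rabs (lap g (phi (px,py)) q) <= Bp).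
  { intros q Hq. pose proof (Sq q Hq) as HqK. pose proof (HK q HqK) as Hqd.
    set (F1 := fun q => phi (0,0) q + (-2*px) * fst q).
    set (F2 := fun q => F1 q + (-2*py) * snd q).
    set (F3 := fun q => F2 q + 1 * (fun _ => px^2 + py^2) q).
    rewrite (lap_ext c g (phi (px,py)) F3); auto.
    2: { intros z _. unfold F3, F2, F1, phi. simpl. ring. }
    unfold F3. rewrite (lap_lin c g F2 (fun _ => px^2+py^2) 1); auto.
    2: { unfold F2. apply sm_plus. unfold F1. apply sm_plus. apply sm_phi. apply sm_mult. apply sm_const. apply sm_fst.
         apply sm_mult. apply sm_const. apply sm_snd. }
    2: apply sm_const.
    rewrite lap_const. unfold F2.
    rewrite (lap_lin c g F1 snd (-2*py)); auto.
    2: { unfold F1. apply sm_plus. apply sm_phi. apply sm_mult. apply sm_const. apply sm_fst. }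
    2: apply sm_snd.
    unfold F1. rewrite (lap_lin c g (phi (0,0)) fst (-2*px)); auto.
    2: apply sm_phi. 2: apply sm_fst.
    specialize (HB0 q HqK). specialize (HB1 q HqK). specialize (HB2 q HqK).
    apply Rabs_le_between in HB0. apply Rabs_le_between in HB1. apply Rabs_le_between in HB2.
    apply Rabs_le. unfold Bp. split; nra. }
  assert (Grad : forall z, insq a b a b z ->
     (Rabs (dx (lap g (fun q => Re (f q))) z) <= G /\ Rabs (dy (lap g (fun q => Re (f q))) z) <= G) /\
     (Rabs (dx (lap g (fun q => Im (f q))) z) <= G /\ Rabs (dy (lap g (fun q => Im (f q))) z) <= G)).
  { intros z Hz. pose proof (HK z Hz) as Hzd. specialize (Hn z Hzd).
    unfold dnormC in Hn. cbv zeta in Hn.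
    change (fun q => Re (lapC g f q)) with (lap g (fun q => Re (f q))) in Hn.
    change (fun q => Im (lapC g f q)) with (lap g (fun q => Im (f q))) in Hn.
    set (a1 := dx (lap g (fun q => Re (f q))) z) in *.
    set (b1 := dy (lap g (fun q => Re (f q))) z) in *.
    set (a2 := dx (lap g (fun q => Im (f q))) z) in *.
    set (b2 := dy (lap g (fun q => Im (f q))) z) in *.
    destruct (covnorm_prop c g z a1 b1 Hzd) as [X0 X1].
    destruct (covnorm_prop c g z a2 b2 Hzd) as [Y0 Y1].
    set (X := covnorm2 g z a1 b1) in *. set (Y := covnorm2 g z a2 b2) in *.
    assert (XY : X + Y <= M^2).
    { rewrite <- (sqrt_sqrt (X + Y)) by lra. pose proof (sqrt_pos (X + Y)). nra. }
    specialize (HT z Hz). apply Rabs_le_between in HT.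
    assert (Tpos : 0 <= g11 g z + g22 g z).
    { destruct (g_posdef c g z Hzd). pose proof (g22_pos c g z Hzd). lra. }
    assert (A1 : a1^2 + b1^2 <= T * M^2) by nra.
    assert (A2 : a2^2 + b2^2 <= T * M^2) by nra.
    assert (L : forall x, Rabs x <= x^2 + 1).
    { intros x. destruct (Rle_lt_dec 0 x). rewrite Rabs_right by lra. nra. rewrite Rabs_left by lra. nra. }
    pose proof (L a1). pose proof (L b1). pose proof (L a2). pose proof (L b2).
    pose proof (pow2_ge_0 a1). pose proof (pow2_ge_0 b1). pose proof (pow2_ge_0 a2). pose proof (pow2_ge_0 b2).
    unfold G. repeat split; lra. }
  assert (Hin : forall q, insq (fst (px,py) - r) (fst (px,py) + r) (snd (px,py) - r) (snd (px,py) + r) q -> opendisc c q).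
  { intros q Hq. apply HK. apply Sq. auto. }
  assert (Osc : forall u, smooth_on c u ->
     (forall z, insq a b a b z -> Rabs (dx (lap g u) z) <= G /\ Rabs (dy (lap g u) z) <= G) ->
     forall q, insq (fst (px,py) - r) (fst (px,py) + r) (snd (px,py) - r) (snd (px,py) + r) q ->
     Rabs (lap g u q - lap g u (px,py)) <= 2 * r * G).
  { intros u Hu HG [qx qy] Hq.
    pose proof (Sq _ Hq) as HqK.
    pose proof (osc c (lap g u) G px py qx qy hc (sm_lap c g u Hu) HG Hp' HqK) as O.
    destruct Hq as [[H1 H2] [H3 H4]]. cbn [fst snd] in *.
    assert (Rabs (qx - px) <= r) by (apply Rabs_le; lra).
    assert (Rabs (qy - py) <= r) by (apply Rabs_le; lra).
    assert (0 <= G).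
    { destruct (HG _ HK0) as [G1 _]. pose proof (Rabs_pos (dx (lap g u) (0,0))). lra. }
    nra. }
  assert (BR : Rabs (lap g (fun q => Re (f q)) (px,py)) <= 2 * r * G + k * Bp).
  { apply (bound_comp c g _ delta r k G Bp (px,py) Hr Hk HsR Hkr); auto.
    intros q Hq. eapply Rle_trans. apply re_le_Cmod. auto.
    apply Osc; auto. intros z Hz. apply (Grad z Hz). }
  assert (BI : Rabs (lap g (fun q => Im (f q)) (px,py)) <= 2 * r * G + k * Bp).
  { apply (bound_comp c g _ delta r k G Bp (px,py) Hr Hk HsI Hkr); auto.
    intros q Hq. eapply Rle_trans. apply im_le_Cmod'. auto.
    apply Osc; auto. intros z Hz. apply (Grad z Hz). }
  unfold Cmod. eapply Rle_trans. apply cmod_le.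
  change (fst (lapC g f (px,py))) with (lap g (fun q => Re (f q)) (px,py)).
  change (snd (lapC g f (px,py))) with (lap g (fun q => Im (f q)) (px,py)).
  lra.
Qed.
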